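(* Let $d\ge2$ and $0<\delta\le 1$, and let $\mathcal{P}_\delta$ be the protection of the Delaunay triangulation of $T_\delta(\mathbb{Z}^d)$ and $R_\delta$ its Delaunay radius. Writing $N_\delta=\delta^4(d^2-1)+\delta^2(d^2+2)+d^2-1$, we have $$\frac{\mathcal{P}_\delta}{R_\delta}=\begin{cases}\sqrt{\dfrac{\delta^4(d^2-1)+\delta^2(d^2-22)+d^2+23}{N_\delta}}-1 & \text{if } \frac{1}{\sqrt{d+1}}<\delta\le1,\\[2mm] \sqrt{\dfrac{d^2+2d+24}{d^2+2d}}-1 & \text{if } \delta=\frac{1}{\sqrt{d+1}},\\[2mm] \sqrt{\dfrac{\delta^4(d^2-1)+\delta^2(d^2+24d+2)+d^2-1}{N_\delta}}-1 & \text{if } 0<\delta<\frac{1}{\sqrt{d+1}}.\end{cases}$$ Moreover $R_\delta=\sqrt{N_\delta/(12d)}$.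
   Context: For $\delta\in\mathbb{R}$ the diagonal distortion $T_\delta:\mathbb{R}^d\to\mathbb{R}^d$ is $T_\delta(x)=x-\frac{1-\delta}{d}\,\Delta(x)\,\mathbf{1}$, with $\Delta(x)=\sum_i x_i$, $\mathbf{1}=(1,\dots,1)$. The Freudenthal triangulation of $[0,1]^d$ consists of the simplices whose vertex sets are chains $p_0\le p_1\le\dots\le p_k$ in $\{0,1\}^d$ (coordinatewise strictly increasing); translating it by all integer vectors gives a triangulation of $\mathbb{R}^d$ with vertex set $\mathbb{Z}^d$. For $0<\delta\le 1$ the Delaunay triangulation of $T_\delta(\mathbb{Z}^d)$ is (for $\delta<1$) the image under $T_\delta$ of this triangulation; all its $d$-simplices are congruent and have the same circumradius, the Delaunay radius $R_\delta$ (for $\delta=1$ take the $T_1$-image of the same Freudenthal simplices, i.e. the Freudenthal simplices themselves). For a Delaunay $d$-simplex $\tau$ with circumcenter $c_\tau$ and circumradius $r_\tau$, its protection is $\min\{\|q-c_\tau\|-r_\tau : q\in T_\delta(\mathbb{Z}^d)\text{ not a vertex of }\tau\}$; the protection $\mathcal{P}_\delta$ of the lattice is the infimum of this over all Delaunay $d$-simplices $\tau$. *)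

(* Defs.v *)
From Stdlib Require Import Reals ZArith List.
Import ListNotations.
Open Scope R_scope.

(* Vectors of R^d are represented as functions nat -> R; only the
   coordinates 0..d-1 are meaningful. Integer points as nat -> Z. *)

Definition vsum (d : nat) (f : nat -> R) : R :=
  fold_right Rplus 0 (map f (seq 0 d)).

Definition dist (d : nat) (x y : nat -> R) : R :=
  sqrt (vsum d (fun i => (x i - y i) ^ 2)).

Definition veq (d : nat) (x y : nat -> R) : Prop :=
  forall i, (i < d)%nat -> x i = y i.

Definition Delta (d : nat) (x : nat -> R) : R := vsum d x.

Definition Tdelta (d : nat) (delta : R) (x : nat -> R) : nat -> R :=
  fun i => x i - (1 - delta) / INR d * Delta d x.

Definition zvec (z : nat -> Z) : nat -> R := fun i => IZR (z i).

(* p = (p_0, ..., p_d) is a chain p_0 < p_1 < ... < p_d in {0,1}^d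
   (coordinatewise <=, and distinct): the vertex set of a Freudenthal
   d-simplex of [0,1]^d. *)
Definition freudenthal_chain (d : nat) (p : nat -> nat -> Z) : Prop :=
  (forall k i, (k <= d)%nat -> (i < d)%nat -> p k i = 0%Z \/ p k i = 1%Z) /\
  (forall k, (k < d)%nat ->
     (forall i, (i < d)%nat -> (p k i <= p (S k) i)%Z) /\
     (exists i, (i < d)%nat /\ p k i <> p (S k) i)).

Definition dvertex (d : nat) (delta : R) (z : nat -> Z) (p : nat -> nat -> Z)
  (k : nat) : nat -> R :=
  Tdelta d delta (fun i => IZR (z i + p k i)).

Definition circumsphere (d : nat) (delta : R) (z : nat -> Z)
  (p : nat -> nat -> Z) (c : nat -> R) (r : R) : Prop :=
  forall k, (k <= d)%nat -> dist d (dvertex d delta z p k) c = r.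

(* The set of values ||q - c_tau|| - r_tau, for tau a Delaunay d-simplex
   and q a lattice point of T_delta(Z^d) that is not a vertex of tau. *)
Definition protection_values (d : nat) (delta : R) (t : R) : Prop :=
  exists (z : nat -> Z) (p : nat -> nat -> Z) (c : nat -> R) (r : R)
         (w : nat -> Z),
    freudenthal_chain d p /\ circumsphere d delta z p c r /\
    (~ exists k, (k <= d)%nat /\
         veq d (Tdelta d delta (zvec w)) (dvertex d delta z p k)) /\
    t = dist d (Tdelta d delta (zvec w)) c - r.

Definition is_glb (E : R -> Prop) (m : R) : Prop :=
  (forall x, E x -> m <= x) /\ (forall b, (forall x, E x -> b <= x) -> b <= m).

Definition Ndelta (d : nat) (delta : R) : R :=
  delta ^ 4 * (INR d ^ 2 - 1) + delta ^ 2 * (INR d ^ 2 + 2) + INR d ^ 2 - 1.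

(* Main.v *)
Require Import Defs.
From Stdlib Require Import Reals ZArith List Lia Lra Psatz Permutation Classical.
Open Scope R_scope.

Lemma fr_acc (l : list R) a : fold_right Rplus a l = fold_right Rplus 0 l + a.
Proof. induction l; simpl; [lra|rewrite IHl; lra]. Qed.

Lemma vsum_0 f : vsum 0 f = 0.
Proof. reflexivity. Qed.

Lemma vsum_S d f : vsum (S d) f = vsum d f + f d.
Proof. unfold vsum. rewrite seq_S, map_app, fold_right_app. simpl.
  rewrite fr_acc. lra. Qed.

Lemma vsum_ext d f g : (forall i, (i<d)%nat -> f i = g i) -> vsum d f = vsum d g.
Proof. induction d; intros H; [reflexivity|]. rewrite !vsum_S.
  rewrite IHd by (intros; apply H; lia). rewrite H by lia. reflexivity. Qed.

Lemma vsum_plus d f g : vsum d (fun i => f i + g i) = vsum d f + vsum d g.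
Proof. induction d; [rewrite !vsum_0; simpl; lra|]. rewrite !vsum_S, IHd. lra. Qed.

Lemma vsum_minus d f g : vsum d (fun i => f i - g i) = vsum d f - vsum d g.
Proof. induction d; [rewrite !vsum_0; simpl; lra|]. rewrite !vsum_S, IHd. lra. Qed.

Lemma vsum_scal d k f : vsum d (fun i => k * f i) = k * vsum d f.
Proof. induction d; [rewrite !vsum_0; simpl; lra|]. rewrite !vsum_S, IHd. lra. Qed.

Lemma vsum_const d k : vsum d (fun _ => k) = INR d * k.
Proof. induction d; [rewrite !vsum_0; simpl; lra|]. rewrite !vsum_S, IHd, S_INR. lra. Qed.

Lemma vsum_nonneg d f : (forall i, (i<d)%nat -> 0 <= f i) -> 0 <= vsum d f.
Proof. induction d; intros H; [rewrite !vsum_0; simpl; lra|]. rewrite vsum_S.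
  assert (0 <= f d) by (apply H; lia). assert (0 <= vsum d f) by (apply IHd; intros; apply H; lia). lra. Qed.

Lemma vsum_ge_term d f j : (forall i, (i<d)%nat -> 0 <= f i) -> (j < d)%nat -> f j <= vsum d f.
Proof. induction d; intros H Hj; [lia|]. rewrite vsum_S.
  destruct (Nat.eq_dec j d) as [->|Hn].
  - assert (0 <= vsum d f) by (apply vsum_nonneg; intros; apply H; lia). lra.
  - assert (f j <= vsum d f) by (apply IHd; [intros; apply H|]; lia).
    assert (0 <= f d) by (apply H; lia). lra. Qed.

Lemma vsum_trunc d k f : (k <= d)%nat ->
  vsum d (fun j => if (j <? k)%nat then f j else 0) = vsum k f.
Proof. induction d; intros Hk.
  - assert (k = 0%nat) by lia. subst. reflexivity.
  - destruct (Nat.eq_dec k (S d)) as [->|Hn].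
    + apply vsum_ext. intros i Hi. destruct (Nat.ltb_spec i (S d)); [reflexivity|lia].
    + rewrite vsum_S, IHd by lia. destruct (Nat.ltb_spec d k); [lia|lra]. Qed.

Lemma vsum_single d k f : (k < d)%nat ->
  vsum d (fun j => if (j =? k)%nat then f j else 0) = f k.
Proof. induction d; intros Hk; [lia|]. rewrite vsum_S.
  destruct (Nat.eq_dec k d) as [->|Hn].
  - rewrite Nat.eqb_refl. rewrite (vsum_ext d _ (fun _ => 0)).
    + rewrite vsum_const. lra.
    + intros i Hi. destruct (Nat.eqb_spec i d); [lia|reflexivity].
  - rewrite IHd by lia. destruct (Nat.eqb_spec d k); [lia|lra]. Qed.

Lemma sum_id d : vsum d INR = INR d * (INR d - 1) / 2.
Proof. induction d; [rewrite !vsum_0; simpl; lra|]. rewrite vsum_S, IHd, S_INR. field. Qed.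

Lemma sum_sq d : vsum d (fun j => INR j ^ 2) = INR d * (INR d - 1) * (2 * INR d - 1) / 6.
Proof. induction d; [rewrite !vsum_0; simpl; lra|]. rewrite vsum_S, IHd, S_INR. field. Qed.

Lemma perm_sum (l l' : list nat) (f : nat -> R) : Permutation l l' ->
  fold_right Rplus 0 (map f l) = fold_right Rplus 0 (map f l').
Proof. induction 1; simpl; lra. Qed.

Lemma vsum_perm d s f : (forall j, (j<d)%nat -> (s j < d)%nat) ->
  (forall i j, (i<d)%nat -> (j<d)%nat -> s i = s j -> i = j) ->
  vsum d f = vsum d (fun j => f (s j)).
Proof. intros H1 H2. unfold vsum. rewrite <- (map_map s f).
  symmetry. apply perm_sum. apply NoDup_Permutation_bis.
  - apply NoDup_map_NoDup_ForallPairs; [|apply seq_NoDup].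
    intros x y Hx Hy. apply in_seq in Hx, Hy. apply H2; lia.
  - rewrite length_map. lia.
  - intros x Hx. apply in_map_iff in Hx. destruct Hx as [j [<- Hj]].
    apply in_seq in Hj. apply in_seq. specialize (H1 j). lia.
Qed.

Definition zsum (d : nat) (f : nat -> Z) : Z := fold_right Z.add 0%Z (map f (seq 0 d)).

Lemma zfr_acc (l : list Z) a : fold_right Z.add a l = (fold_right Z.add 0 l + a)%Z.
Proof. induction l; simpl; [lia|rewrite IHl; lia]. Qed.

Lemma zsum_S d f : zsum (S d) f = (zsum d f + f d)%Z.
Proof. unfold zsum. rewrite seq_S, map_app, fold_right_app. simpl.
  rewrite zfr_acc. lia. Qed.

Lemma zsum_0 f : zsum 0 f = 0%Z.
Proof. reflexivity. Qed.

Lemma zsum_mono d x y : (forall i, (i<d)%nat -> (x i <= y i)%Z) -> (zsum d x <= zsum d y)%Z.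
Proof. induction d; intros H; [rewrite !zsum_0; lia|]. rewrite !zsum_S.
  assert (zsum d x <= zsum d y)%Z by (apply IHd; intros; apply H; lia).
  specialize (H d). lia. Qed.

Lemma zsum_mono1 d x y i0 : (forall i, (i<d)%nat -> (x i <= y i)%Z) -> (i0 < d)%nat ->
  (zsum d x + (y i0 - x i0) <= zsum d y)%Z.
Proof. induction d; intros H Hi; [lia|]. rewrite !zsum_S.
  destruct (Nat.eq_dec i0 d) as [->|Hn].
  - assert (zsum d x <= zsum d y)%Z by (apply zsum_mono; intros; apply H; lia). lia.
  - assert (zsum d x + (y i0 - x i0) <= zsum d y)%Z by (apply IHd; [intros; apply H|]; lia).
    specialize (H d). lia. Qed.

Lemma zsum_mono2 d x y i0 i1 : (forall i, (i<d)%nat -> (x i <= y i)%Z) -> (i0 < d)%nat ->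
  (i1 < d)%nat -> i0 <> i1 ->
  (zsum d x + (y i0 - x i0) + (y i1 - x i1) <= zsum d y)%Z.
Proof. induction d; intros H Hi0 Hi1 Hne; [lia|]. rewrite !zsum_S.
  destruct (Nat.eq_dec i0 d) as [->|Hn0].
  - assert (zsum d x + (y i1 - x i1) <= zsum d y)%Z by (apply zsum_mono1; [intros; apply H|]; lia). lia.
  - destruct (Nat.eq_dec i1 d) as [->|Hn1].
    + assert (zsum d x + (y i0 - x i0) <= zsum d y)%Z by (apply zsum_mono1; [intros; apply H|]; lia). lia.
    + assert (zsum d x + (y i0 - x i0) + (y i1 - x i1) <= zsum d y)%Z by (apply IHd; [intros; apply H|..]; lia).
      specialize (H d). lia. Qed.

Lemma zsum_bounds d x : (forall i, (i<d)%nat -> (0 <= x i <= 1)%Z) ->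
  (0 <= zsum d x <= Z.of_nat d)%Z.
Proof. induction d; intros H; [rewrite zsum_0; lia|]. rewrite zsum_S.
  assert (0 <= zsum d x <= Z.of_nat d)%Z by (apply IHd; intros; apply H; lia).
  specialize (H d). lia. Qed.

Definition chg (d : nat) (p : nat -> nat -> Z) (k : nat) : nat :=
  match find (fun i => negb (Z.eqb (p k i) (p (S k) i))) (seq 0 d) with
  | Some i => i | None => 0%nat end.

Definition inv_of (d : nat) (s : nat -> nat) (i : nat) : nat :=
  match find (fun j => Nat.eqb (s j) i) (seq 0 d) with
  | Some j => j | None => 0%nat end.

Lemma chain_struct d p : freudenthal_chain d p -> exists s t : nat -> nat,
  (forall j, (j<d)%nat -> (s j < d)%nat) /\ (forall i, (i<d)%nat -> (t i < d)%nat) /\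
  (forall j, (j<d)%nat -> t (s j) = j) /\ (forall i, (i<d)%nat -> s (t i) = i) /\
  (forall k i, (k <= d)%nat -> (i < d)%nat -> p k i = if (t i <? k)%nat then 1%Z else 0%Z).
Proof.
  intros [H01 Hst].
  set (S0 := fun k => zsum d (p k)).
  assert (Hstep : forall k, (k < d)%nat -> (S0 k + 1 <= S0 (S k))%Z).
  { intros k Hk. destruct (Hst k Hk) as [Hm [i0 [Hi0 Hne]]].
    pose proof (zsum_mono1 d (p k) (p (S k)) i0 Hm Hi0). specialize (Hm i0 Hi0).
    unfold S0. lia. }
  assert (Hb : forall k, (k <= d)%nat -> (0 <= S0 k <= Z.of_nat d)%Z).
  { intros k Hk. apply zsum_bounds. intros i Hi. destruct (H01 k i Hk Hi); lia. }
  assert (Hlow : forall k, (k <= d)%nat -> (S0 0%nat + Z.of_nat k <= S0 k)%Z).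
  { induction k; intros Hk; [simpl; lia|]. specialize (IHk ltac:(lia)). specialize (Hstep k ltac:(lia)). lia. }
  assert (Hup : forall k, (k <= d)%nat -> (S0 k + Z.of_nat (d - k) <= S0 d)%Z).
  { assert (G : forall m, (m <= d)%nat -> (S0 (d - m)%nat + Z.of_nat m <= S0 d)%Z).
    { induction m; intros Hm.
      - replace (d - 0)%nat with d by lia. lia.
      - specialize (IHm ltac:(lia)). pose proof (Hstep (d - S m)%nat ltac:(lia)) as Hs.
        replace (S (d - S m)) with (d - m)%nat in Hs by lia. lia. }
    intros k Hk. pose proof (G (d - k)%nat ltac:(lia)) as G2.
    replace (d - (d - k))%nat with k in G2 by lia. exact G2. }
  assert (HS : forall k, (k <= d)%nat -> S0 k = Z.of_nat k).
  { intros k Hk. pose proof (Hlow k Hk). pose proof (Hup k Hk). pose proof (Hb 0%nat ltac:(lia)).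
    pose proof (Hb d ltac:(lia)). lia. }
  assert (Hone : forall k i j, (k < d)%nat -> (i < d)%nat -> (j < d)%nat ->
     p k i <> p (S k) i -> p k j <> p (S k) j -> i = j).
  { intros k i j Hk Hi Hj Ha Hb2. destruct (Nat.eq_dec i j) as [|Hn]; [auto|exfalso].
    destruct (Hst k Hk) as [Hm _].
    pose proof (zsum_mono2 d (p k) (p (S k)) i j Hm Hi Hj Hn).
    pose proof (Hm i Hi). pose proof (Hm j Hj).
    pose proof (HS k ltac:(lia)). pose proof (HS (S k) ltac:(lia)). unfold S0 in *. lia. }
  assert (Hp0 : forall i, (i < d)%nat -> p 0%nat i = 0%Z).
  { intros i Hi. destruct (H01 0%nat i ltac:(lia) Hi) as [|H1]; [auto|exfalso].
    assert (Hz : forall i, (i<d)%nat -> ((fun _ => 0%Z) i <= p 0%nat i)%Z).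
    { intros j Hj. destruct (H01 0%nat j ltac:(lia) Hj); simpl; lia. }
    pose proof (zsum_mono1 d (fun _ => 0%Z) (p 0%nat) i Hz Hi).
    assert (zsum d (fun _ => 0%Z) = 0%Z).
    { clear -d. induction d; [reflexivity|]. rewrite zsum_S, IHd. lia. }
    pose proof (HS 0%nat ltac:(lia)). unfold S0 in *. simpl in *. lia. }
  set (s := chg d p).
  assert (Hs : forall k, (k < d)%nat -> (s k < d)%nat /\ p k (s k) = 0%Z /\ p (S k) (s k) = 1%Z).
  { intros k Hk. unfold s, chg.
    destruct (find _ _) as [i|] eqn:E.
    - apply find_some in E. destruct E as [Hin Hf]. apply in_seq in Hin.
      apply Bool.negb_true_iff, Z.eqb_neq in Hf.
      destruct (Hst k Hk) as [Hm _]. specialize (Hm i ltac:(lia)).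
      destruct (H01 k i ltac:(lia) ltac:(lia)); destruct (H01 (S k) i ltac:(lia) ltac:(lia)); split; try lia.
    - exfalso. destruct (Hst k Hk) as [_ [i0 [Hi0 Hne]]].
      pose proof (find_none _ _ E i0 ltac:(apply in_seq; lia)) as Hf. simpl in Hf.
      apply Bool.negb_false_iff, Z.eqb_eq in Hf. auto. }
  assert (Hsame : forall k i, (k < d)%nat -> (i < d)%nat -> i <> s k -> p (S k) i = p k i).
  { intros k i Hk Hi Hn. destruct (Z.eq_dec (p (S k) i) (p k i)) as [|Hne]; [auto|exfalso].
    destruct (Hs k Hk) as [Hsk [Ha Hb2]]. apply Hn. apply (Hone k); auto; lia. }
  assert (Hinv : forall k, (k <= d)%nat -> forall i, (i < d)%nat ->
     (p k i = 1%Z /\ exists j, (j < k)%nat /\ s j = i) \/ (p k i = 0%Z /\ forall j, (j < k)%nat -> s j <> i)).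
  { induction k; intros Hk i Hi.
    - right. split; [apply Hp0; auto|intros; lia].
    - destruct (Nat.eq_dec i (s k)) as [->|Hn].
      + left. split; [apply (Hs k); lia|exists k; split; [lia|auto]].
      + rewrite Hsame by lia. destruct (IHk ltac:(lia) i Hi) as [[Ha [j [Hj Hsj]]]|[Ha Hj]].
        * left. split; auto. exists j. split; [lia|auto].
        * right. split; auto. intros j Hj2. destruct (Nat.eq_dec j k) as [->|Hjk]; [auto|apply Hj; lia]. }
  assert (Hinj : forall i j, (i<d)%nat -> (j<d)%nat -> s i = s j -> i = j).
  { assert (W : forall i j, (i < j)%nat -> (j<d)%nat -> s i = s j -> False).
    { intros i j Hij Hj Heq. destruct (Hs j Hj) as [Hsj [Ha _]].
      destruct (Hinv j ltac:(lia) (s j) Hsj) as [[Hb2 _]|[_ Hb2]]; [lia|].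
      apply (Hb2 i Hij Heq). }
    intros i j Hi Hj Heq. destruct (Nat.lt_trichotomy i j) as [H|[H|H]]; auto.
    - exfalso; apply (W i j); auto.
    - exfalso; apply (W j i); auto. }
  assert (Hbnd : forall j, (j<d)%nat -> (s j < d)%nat) by (intros; apply Hs; auto).
  assert (Hperm : Permutation (map s (seq 0 d)) (seq 0 d)).
  { apply NoDup_Permutation_bis.
    - apply NoDup_map_NoDup_ForallPairs; [|apply seq_NoDup].
      intros x y Hx Hy. apply in_seq in Hx, Hy. apply Hinj; lia.
    - rewrite length_map. lia.
    - intros x Hx. apply in_map_iff in Hx. destruct Hx as [j [<- Hj]].
      apply in_seq in Hj. apply in_seq. specialize (Hbnd j). lia. }
  set (t := inv_of d s).
  assert (Ht : forall i, (i<d)%nat -> (t i < d)%nat /\ s (t i) = i).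
  { intros i Hi. unfold t, inv_of. destruct (find _ _) as [j|] eqn:E.
    - apply find_some in E. destruct E as [Hin Hf]. apply in_seq in Hin.
      apply Nat.eqb_eq in Hf. split; [lia|auto].
    - exfalso. assert (Hin : In i (map s (seq 0 d))).
      { apply (Permutation_in _ (Permutation_sym Hperm)). apply in_seq. lia. }
      apply in_map_iff in Hin. destruct Hin as [j [Hj Hin]].
      pose proof (find_none _ _ E j Hin) as Hf. simpl in Hf. apply Nat.eqb_neq in Hf. auto. }
  exists s, t. split; [auto|]. split; [intros; apply Ht; auto|]. split.
  { intros j Hj. apply Hinj; [apply Ht, Hbnd; auto|auto|]. apply Ht, Hbnd; auto. }
  split; [intros; apply Ht; auto|].
  intros k i Hk Hi. destruct (Ht i Hi) as [Hti Hsti].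
  destruct (Hinv k Hk i Hi) as [[Ha [j [Hj Hsj]]]|[Ha Hj]].
  - assert (j = t i) by (apply Hinj; try lia; congruence). subst j.
    destruct (Nat.ltb_spec (t i) k); [auto|lia].
  - destruct (Nat.ltb_spec (t i) k); [|auto]. exfalso. apply (Hj (t i)); auto.
Qed.

Definition al d (de : R) := (1 - de) / INR d.
Definition be d (de : R) := (1 - de^2) / INR d.

Lemma T_eq d de x i : Tdelta d de x i = x i - al d de * vsum d x.
Proof. reflexivity. Qed.

Lemma polar d de x c : INR d <> 0 ->
  vsum d (fun i => (Tdelta d de x i - c i)^2) =
  vsum d (fun i => x i ^ 2) - be d de * (vsum d x)^2
  - 2 * vsum d (fun i => x i * Tdelta d de c i) + vsum d (fun i => c i ^ 2).
Proof. intros HD.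
  set (S := vsum d x). set (Sc := vsum d c). set (a := al d de).
  rewrite (vsum_ext d (fun i => (Tdelta d de x i - c i)^2)
    (fun i => ((((x i^2 + c i^2) + (-2) * (x i * c i)) + (-2*a*S) * x i) + (2*a*S) * c i) + a^2*S^2))
    by (intros; rewrite T_eq; fold S; fold a; ring).
  rewrite (vsum_ext d (fun i => x i * Tdelta d de c i) (fun i => x i * c i + (-a*Sc) * x i))
    by (intros; rewrite T_eq; fold Sc; fold a; ring).
  rewrite !vsum_plus, !vsum_scal, vsum_const. fold S Sc.
  unfold a, al, be. field. auto. Qed.

Lemma dbl n v : vsum n (fun j => vsum j (fun i => (v i - v j) * (v i - v j - 1))) =
  INR n * vsum n (fun j => v j ^ 2) - (vsum n v)^2 - vsum n (fun j => v j * (INR n - 1 - 2 * INR j)).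
Proof. induction n.
  - rewrite !vsum_0. simpl. ring.
  - rewrite !vsum_S. cbv beta. rewrite IHn.
    rewrite (vsum_ext n (fun i => (v i - v n) * (v i - v n - 1))
      (fun i => (v i ^ 2 + (-(2 * v n + 1)) * v i) + (v n ^ 2 + v n))) by (intros; cbv beta; ring).
    rewrite (vsum_ext n (fun j => v j * (INR (S n) - 1 - 2 * INR j))
      (fun j => v j * (INR n - 1 - 2 * INR j) + v j)) by (intros; cbv beta; rewrite S_INR; ring).
    rewrite !vsum_plus, !vsum_scal, !vsum_const, S_INR. ring. Qed.

Lemma decomp n b v : vsum n (fun j => v j ^ 2) - b * (vsum n v)^2 - vsum n v
   + b * vsum n (fun j => v j * (2 * INR j + 1)) =
  (1 - b * INR n) * vsum n (fun j => v j * (v j - 1)) +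
  b * vsum n (fun j => vsum j (fun i => (v i - v j) * (v i - v j - 1))).
Proof. rewrite dbl.
  rewrite (vsum_ext n (fun j => v j * (v j - 1)) (fun j => v j ^ 2 + (-1) * v j)) by (intros; cbv beta; ring).
  rewrite (vsum_ext n (fun j => v j * (INR n - 1 - 2 * INR j))
     (fun j => (INR n) * v j + (-1) * (v j * (2 * INR j + 1)))) by (intros; cbv beta; ring).
  rewrite !vsum_plus, !vsum_scal. ring. Qed.

Definition bij d (s t : nat -> nat) :=
  (forall j, (j<d)%nat -> (s j < d)%nat) /\ (forall i, (i<d)%nat -> (t i < d)%nat) /\
  (forall j, (j<d)%nat -> t (s j) = j) /\ (forall i, (i<d)%nat -> s (t i) = i).

Lemma reidx_s d s t f : bij d s t -> vsum d f = vsum d (fun j => f (s j)).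
Proof. intros (H1&H2&H3&H4). apply vsum_perm; auto.
  intros i j Hi Hj E. rewrite <- (H3 i Hi), <- (H3 j Hj), E. reflexivity. Qed.

Lemma reidx_t d s t g : bij d s t -> vsum d (fun i => g (t i)) = vsum d g.
Proof. intros (H1&H2&H3&H4). symmetry. apply vsum_perm; auto.
  intros i j Hi Hj E. rewrite <- (H4 i Hi), <- (H4 j Hj), E. reflexivity. Qed.

Definition tt d de (t : nat -> nat) i := 1/2 - be d de * (INR (t i) + 1/2).

Lemma sum_lin d b : vsum d (fun j => 1/2 - b * (INR j + 1/2)) = INR d / 2 - b * INR d ^ 2 / 2.
Proof. rewrite (vsum_ext d (fun j => 1/2 - b * (INR j + 1/2)) (fun j => (-b) * INR j + (1/2 - b/2))) by (intros; cbv beta; field).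
  rewrite vsum_plus, vsum_scal, vsum_const, sum_id. field. Qed.

Lemma sum_linsq d b : vsum d (fun j => (1/2 - b * (INR j + 1/2))^2) =
  b^2 * (INR d * (INR d - 1) * (2 * INR d - 1) / 6) - 2 * (1/2 - b/2) * b * (INR d * (INR d - 1) / 2)
  + INR d * (1/2 - b/2)^2.
Proof. rewrite (vsum_ext d (fun j => (1/2 - b * (INR j + 1/2))^2) (fun j => b^2 * INR j ^ 2 + (-(2*(1/2 - b/2)*b)) * INR j + (1/2-b/2)^2))
    by (intros; cbv beta; field).
  rewrite !vsum_plus, !vsum_scal, vsum_const, sum_id, sum_sq. field. Qed.

Lemma sq_from_T d de s t c : INR d <> 0 -> de <> 0 -> bij d s t ->
  (forall i, (i<d)%nat -> Tdelta d de c i = tt d de t i) ->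
  vsum d (fun i => c i ^ 2) = Ndelta d de / (12 * INR d).
Proof. intros HD Hde Hb HT.
  set (K := vsum d c). set (a := al d de).
  assert (Htt : vsum d (tt d de t) = INR d / 2 - be d de * INR d ^ 2 / 2).
  { unfold tt. rewrite (reidx_t d s t (fun j => 1/2 - be d de * (INR j + 1/2))) by auto.
    apply sum_lin. }
  assert (HK : K * de = INR d / 2 - be d de * INR d ^ 2 / 2).
  { rewrite <- Htt. rewrite <- (vsum_ext d (Tdelta d de c)) by auto.
    rewrite (vsum_ext d (Tdelta d de c) (fun i => c i - a * K)) by (intros; rewrite T_eq; reflexivity).
    rewrite vsum_minus, vsum_const. fold K. unfold a, al. field. auto. }
  rewrite (vsum_ext d (fun i => c i ^ 2) (fun i => (tt d de t i)^2 + (2*a*K) * tt d de t i + (a*K)^2)).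
  2:{ intros i Hi. rewrite <- HT by auto. rewrite T_eq. fold K a. ring. }
  rewrite !vsum_plus, vsum_scal, vsum_const, Htt.
  unfold tt. rewrite (reidx_t d s t (fun j => (1/2 - be d de * (INR j + 1/2))^2)) by auto.
  rewrite sum_linsq.
  assert (K = (INR d / 2 - be d de * INR d ^ 2 / 2) / de) as -> by (rewrite <- HK; field; auto).
  unfold a, al, be, Ndelta. field. auto. Qed.

Definition ind (t : nat -> nat) k i : R := if (t i <? k)%nat then 1 else 0.

Lemma sum_ind d s t k g : bij d s t -> (k <= d)%nat ->
  vsum d (fun i => ind t k i * g i) = vsum k (fun j => g (s j)).
Proof. intros Hb Hk. rewrite (reidx_s d s t) by auto.
  rewrite <- (vsum_trunc d k) by auto. apply vsum_ext. intros j Hj.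
  destruct Hb as (H1&H2&H3&H4). unfold ind. rewrite H3 by auto.
  destruct (j <? k)%nat; ring. Qed.

Lemma T_ext d de x y i : (forall j, x j = y j) -> Tdelta d de x i = Tdelta d de y i.
Proof. intros H. rewrite !T_eq. rewrite (vsum_ext d x y) by auto. rewrite H. reflexivity. Qed.

Lemma T_add d de x y i : Tdelta d de (fun j => x j + y j) i = Tdelta d de x i + Tdelta d de y i.
Proof. rewrite !T_eq, vsum_plus. ring. Qed.

Definition shiftc d de (z : nat -> Z) (c : nat -> R) i := c i - Tdelta d de (zvec z) i.

Lemma dist_shift d de z (u : nat -> Z) c :
  Defs.dist d (Tdelta d de (fun i => IZR (z i + u i))) c =
  sqrt (vsum d (fun i => (Tdelta d de (fun i => IZR (u i)) i - shiftc d de z c i)^2)).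
Proof. unfold Defs.dist. f_equal. apply vsum_ext. intros i Hi.
  rewrite (T_ext d de _ (fun j => zvec z j + IZR (u j))) by (intros; unfold zvec; apply plus_IZR).
  rewrite T_add. unfold shiftc. f_equal. ring. Qed.

Lemma IZR_ind (b : bool) : IZR (if b then 1%Z else 0%Z) = if b then 1 else 0.
Proof. destruct b; reflexivity. Qed.

Lemma Vk_formula d de s t p c' k : INR d <> 0 -> bij d s t ->
  (forall k i, (k <= d)%nat -> (i < d)%nat -> p k i = if (t i <? k)%nat then 1%Z else 0%Z) ->
  (k <= d)%nat ->
  vsum d (fun i => (Tdelta d de (fun i => IZR (p k i)) i - c' i)^2) =
  INR k - be d de * INR k ^ 2 - 2 * vsum k (fun j => Tdelta d de c' (s j)) + vsum d (fun i => c' i ^ 2).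
Proof. intros HD Hb Hp Hk. rewrite polar by auto.
  rewrite (vsum_ext d (fun i => IZR (p k i) ^ 2) (fun i => ind t k i * 1)).
  2:{ intros i Hi. rewrite Hp by auto. rewrite IZR_ind. unfold ind. destruct (t i <? k)%nat; ring. }
  rewrite (vsum_ext d (fun i => IZR (p k i)) (fun i => ind t k i * 1)).
  2:{ intros i Hi. rewrite Hp by auto. rewrite IZR_ind. unfold ind. destruct (t i <? k)%nat; ring. }
  rewrite (vsum_ext d (fun i => IZR (p k i) * Tdelta d de c' i) (fun i => ind t k i * Tdelta d de c' i)).
  2:{ intros i Hi. rewrite Hp by auto. rewrite IZR_ind. reflexivity. }
  rewrite !(sum_ind d s t) by auto. rewrite vsum_const. ring. Qed.

Definition Rad d de := sqrt (Ndelta d de / (12 * INR d)).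

Lemma center d de z p c r : (2 <= d)%nat -> 0 < de <= 1 -> freudenthal_chain d p ->
  circumsphere d de z p c r ->
  exists s t, bij d s t /\
  (forall k i, (k <= d)%nat -> (i < d)%nat -> p k i = if (t i <? k)%nat then 1%Z else 0%Z) /\
  (forall i, (i<d)%nat -> Tdelta d de (shiftc d de z c) i = tt d de t i) /\ r = Rad d de.
Proof. intros Hd Hde Hch Hc.
  assert (HD : INR d <> 0) by (apply not_0_INR; lia).
  destruct (chain_struct d p Hch) as (s & t & H1 & H2 & H3 & H4 & Hp).
  assert (Hb : bij d s t) by (repeat split; auto).
  exists s, t. split; [auto|]. split; [auto|].
  set (c' := shiftc d de z c).
  assert (HV : forall k, (k <= d)%nat -> r ^ 2 =
     INR k - be d de * INR k ^ 2 - 2 * vsum k (fun j => Tdelta d de c' (s j)) + vsum d (fun i => c' i ^ 2)).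
  { intros k Hk. rewrite <- (Vk_formula d de s t p c' k) by auto.
    rewrite <- (Hc k Hk). unfold dvertex. rewrite (dist_shift d de z (p k) c). fold c'.
    apply pow2_sqrt. apply vsum_nonneg. intros; apply pow2_ge_0. }
  assert (H0 := HV 0%nat ltac:(lia)). rewrite vsum_0 in H0. simpl INR in H0.
  assert (HT : forall i, (i<d)%nat -> Tdelta d de c' i = tt d de t i).
  { assert (Hs : forall j, (j < d)%nat -> Tdelta d de c' (s j) = 1/2 - be d de * (INR j + 1/2)).
    { intros j Hj. pose proof (HV j ltac:(lia)) as A1. pose proof (HV (S j) ltac:(lia)) as A2.
      rewrite vsum_S, S_INR in A2. lra. }
    intros i Hi. rewrite <- (H4 i Hi). rewrite Hs by auto. unfold tt. rewrite H4 by auto.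
    reflexivity. }
  split; [exact HT|].
  assert (Hsq : vsum d (fun i => c' i ^ 2) = Ndelta d de / (12 * INR d))
    by (apply (sq_from_T d de s t); auto; lra).
  assert (Hr : 0 <= r).
  { pose proof (Hc 0%nat ltac:(lia)) as E. rewrite <- E. apply sqrt_pos. }
  unfold Rad. rewrite <- Hsq. rewrite <- (sqrt_pow2 r Hr). f_equal. lra. Qed.

Lemma exist_center d de z p : (2 <= d)%nat -> 0 < de <= 1 -> freudenthal_chain d p ->
  exists c, circumsphere d de z p c (Rad d de).
Proof. intros Hd Hde Hch.
  assert (HD : INR d <> 0) by (apply not_0_INR; lia).
  destruct (chain_struct d p Hch) as (s & t & H1 & H2 & H3 & H4 & Hp).
  assert (Hb : bij d s t) by (repeat split; auto).
  set (K := (INR d / 2 - be d de * INR d ^ 2 / 2) / de).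
  set (c' := fun i => tt d de t i + al d de * K).
  exists (fun i => Tdelta d de (zvec z) i + c' i).
  assert (Hsh : forall i, shiftc d de z (fun i => Tdelta d de (zvec z) i + c' i) i = c' i)
    by (intros; unfold shiftc; ring).
  assert (Hsum : vsum d c' = K).
  { unfold c'. rewrite vsum_plus, vsum_const.
    unfold tt. rewrite (reidx_t d s t (fun j => 1/2 - be d de * (INR j + 1/2))) by auto.
    rewrite sum_lin. unfold K, al. field. split; auto; lra. }
  assert (HT : forall i, (i<d)%nat -> Tdelta d de c' i = tt d de t i).
  { intros i Hi. rewrite T_eq, Hsum. unfold c'. ring. }
  intros k Hk. unfold dvertex. rewrite dist_shift.
  rewrite (vsum_ext d _ (fun i => (Tdelta d de (fun i => IZR (p k i)) i - c' i) ^ 2))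
    by (intros; rewrite Hsh; reflexivity).
  rewrite (Vk_formula d de s t p c' k) by auto.
  rewrite (sq_from_T d de s t c') by (auto; lra).
  rewrite (vsum_ext k (fun j => Tdelta d de c' (s j)) (fun j => 1/2 - be d de * (INR j + 1/2))).
  2:{ intros j Hj. rewrite HT by (apply H1; lia). unfold tt. rewrite H3 by lia. reflexivity. }
  rewrite sum_lin. unfold Rad. f_equal. field. auto. Qed.

Definition Fval d de (t : nat -> nat) (u : nat -> R) :=
  vsum d (fun i => u i ^ 2) - be d de * (vsum d u) ^ 2 - 2 * vsum d (fun i => u i * tt d de t i).

Lemma prot_formula d de z p c r : (2 <= d)%nat -> 0 < de <= 1 -> freudenthal_chain d p ->
  circumsphere d de z p c r ->
  exists s t, bij d s t /\
  (forall k i, (k <= d)%nat -> (i < d)%nat -> p k i = if (t i <? k)%nat then 1%Z else 0%Z) /\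
  r = Rad d de /\
  forall w, Defs.dist d (Tdelta d de (zvec w)) c =
    sqrt (Fval d de t (fun i => IZR (w i - z i)) + Ndelta d de / (12 * INR d)).
Proof. intros Hd Hde Hch Hc.
  assert (HD : INR d <> 0) by (apply not_0_INR; lia).
  destruct (center d de z p c r Hd Hde Hch Hc) as (s & t & Hb & Hp & HT & Hr).
  exists s, t. split; [auto|]. split; [auto|]. split; [auto|].
  intros w.
  assert (E : Defs.dist d (Tdelta d de (zvec w)) c =
     Defs.dist d (Tdelta d de (fun i => IZR (z i + (w i - z i)))) c).
  { unfold Defs.dist. f_equal. apply vsum_ext. intros i Hi. f_equal. f_equal.
    apply T_ext. intros j. unfold zvec. f_equal. ring. }
  rewrite E, dist_shift, polar by auto. f_equal.
  rewrite (sq_from_T d de s t (shiftc d de z c)) by (auto; lra).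
  unfold Fval. f_equal. f_equal. f_equal. apply vsum_ext. intros i Hi. rewrite HT; auto. Qed.

Lemma zpos n : 0 <= IZR n * (IZR n - 1).
Proof. rewrite <- minus_IZR, <- mult_IZR. apply IZR_le. nia. Qed.

Lemma ztwo n : n <> 0%Z -> n <> 1%Z -> 2 <= IZR n * (IZR n - 1).
Proof. intros. rewrite <- minus_IZR, <- mult_IZR. apply IZR_le.
  assert (n <= -1 \/ 2 <= n)%Z as [Hq|Hq] by lia; nia. Qed.

Lemma stair (n : nat) (f : nat -> Z) : (forall j, (j<n)%nat -> f j = 0%Z \/ f j = 1%Z) ->
  (forall i j, (i < j)%nat -> (j < n)%nat -> (f j <= f i)%Z) ->
  exists k, (k <= n)%nat /\ forall j, (j<n)%nat -> f j = if (j <? k)%nat then 1%Z else 0%Z.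
Proof. induction n; intros H1 H2.
  - exists 0%nat. split; [lia|intros; lia].
  - destruct IHn as [k [Hk Hf]]; [intros; apply H1; lia|intros; apply H2; lia|].
    destruct (H1 n ltac:(lia)) as [E|E].
    + exists k. split; [lia|]. intros j Hj. destruct (Nat.eq_dec j n) as [->|Hn].
      * destruct (Nat.ltb_spec n k); [lia|auto].
      * apply Hf; lia.
    + exists (S n). split; [lia|]. intros j Hj. destruct (Nat.ltb_spec j (S n)); [|lia].
      destruct (Nat.eq_dec j n) as [->|Hn]; [auto|].
      pose proof (H2 j n ltac:(lia) ltac:(lia)). destruct (H1 j ltac:(lia)); lia. Qed.

Lemma F_lb d de s t p z w : (2 <= d)%nat -> 0 < de <= 1 -> bij d s t ->
  (forall k i, (k <= d)%nat -> (i < d)%nat -> p k i = if (t i <? k)%nat then 1%Z else 0%Z) ->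
  ~ (exists k, (k <= d)%nat /\ forall i, (i < d)%nat -> w i = (z i + p k i)%Z) ->
  Rmin (2 * de ^ 2) (2 * be d de) <= Fval d de t (fun i => IZR (w i - z i)).
Proof. intros Hd Hde Hb Hp Hnv.
  assert (HD : INR d <> 0) by (apply not_0_INR; lia).
  assert (HD2 : 2 <= INR d) by (replace 2 with (INR 2) by (simpl; lra); apply le_INR; lia).
  assert (Hbe : 0 <= be d de).
  { unfold be. unfold Rdiv; apply Rmult_le_pos; [|left; apply Rinv_0_lt_compat; lra]. assert (de^2 <= 1) by (rewrite <- (pow1 2); apply pow_incr; lra). lra. }
  set (V := fun j => (w (s j) - z (s j))%Z).
  set (v := fun j => IZR (V j)).
  assert (HF : Fval d de t (fun i => IZR (w i - z i)) =
     de ^ 2 * vsum d (fun j => v j * (v j - 1)) +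
     be d de * vsum d (fun j => vsum j (fun i => (v i - v j) * (v i - v j - 1)))).
  { unfold Fval.
    rewrite (reidx_s d s t (fun i => IZR (w i - z i) ^ 2) Hb).
    rewrite (reidx_s d s t (fun i => IZR (w i - z i)) Hb).
    rewrite (reidx_s d s t (fun i => IZR (w i - z i) * tt d de t i) Hb).
    cbv beta.
    change (fun j => IZR (w (s j) - z (s j)) ^ 2) with (fun j => v j ^ 2).
    change (fun j => IZR (w (s j) - z (s j))) with v.
    change (fun j => IZR (w (s j) - z (s j)) * tt d de t (s j)) with (fun j => v j * tt d de t (s j)).
    rewrite (vsum_ext d (fun j => v j * tt d de t (s j)) (fun j => (1/2) * v j + (- (be d de / 2)) * (v j * (2 * INR j + 1)))).
    2:{ intros j Hj. unfold tt. destruct Hb as (_&_&H3&_). rewrite H3 by auto. field. }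
    rewrite vsum_plus, !vsum_scal.
    replace (de ^ 2) with (1 - be d de * INR d) by (unfold be; field; auto).
    rewrite <- decomp. field. }
  assert (Ha0 : forall j, (j < d)%nat -> 0 <= v j * (v j - 1)) by (intros; apply zpos).
  assert (Hb0 : forall j, (j < d)%nat -> 0 <= vsum j (fun i => (v i - v j) * (v i - v j - 1))).
  { intros j Hj. apply vsum_nonneg. intros i Hi. unfold v. rewrite <- minus_IZR. apply zpos. }
  assert (HA : 0 <= vsum d (fun j => v j * (v j - 1))) by (apply vsum_nonneg; auto).
  assert (HB : 0 <= vsum d (fun j => vsum j (fun i => (v i - v j) * (v i - v j - 1)))) by (apply vsum_nonneg; auto).
  assert (Hde2 : 0 < de ^ 2) by (apply pow_lt; lra).
  rewrite HF.
  destruct (classic (exists j, (j < d)%nat /\ V j <> 0%Z /\ V j <> 1%Z)) as [[j [Hj [Hn0 Hn1]]]|Hn1].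
  { assert (2 <= vsum d (fun j => v j * (v j - 1))).
    { eapply Rle_trans; [|apply (vsum_ge_term d _ j); auto]. apply ztwo; auto. }
    pose proof (Rmin_l (2 * de ^ 2) (2 * be d de)).
    assert (2 * de ^ 2 <= de ^ 2 * vsum d (fun j => v j * (v j - 1))) by (rewrite (Rmult_comm 2); apply Rmult_le_compat_l; lra).
    assert (0 <= be d de * vsum d (fun j => vsum j (fun i => (v i - v j) * (v i - v j - 1)))) by (apply Rmult_le_pos; auto).
    lra. }
  destruct (classic (exists i j, (i < j)%nat /\ (j < d)%nat /\ (V i - V j)%Z <> 0%Z /\ (V i - V j)%Z <> 1%Z))
    as [[i [j [Hij [Hj [Hn0 Hn2]]]]]|Hn2].
  { assert (2 <= vsum d (fun j => vsum j (fun i => (v i - v j) * (v i - v j - 1)))).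
    { eapply Rle_trans; [|apply (vsum_ge_term d _ j); auto].
      eapply Rle_trans; [|apply (vsum_ge_term j _ i); auto].
      - unfold v. rewrite <- minus_IZR. apply ztwo; auto.
      - intros i' Hi'. unfold v. rewrite <- minus_IZR. apply zpos. }
    pose proof (Rmin_r (2 * de ^ 2) (2 * be d de)).
    assert (2 * be d de <= be d de * vsum d (fun j => vsum j (fun i => (v i - v j) * (v i - v j - 1)))) by (rewrite (Rmult_comm 2); apply Rmult_le_compat_l; lra).
    assert (0 <= de ^ 2 * vsum d (fun j => v j * (v j - 1))) by (apply Rmult_le_pos; lra).
    lra. }
  exfalso. destruct (stair d V) as [k [Hk Hf]].
  - intros j Hj. destruct (Z.eq_dec (V j) 0) as [|E0]; [auto|]. destruct (Z.eq_dec (V j) 1) as [|E1]; [auto|].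
    exfalso. apply Hn1. exists j. auto.
  - intros i j Hij Hj. destruct (Z.eq_dec (V i - V j) 0) as [|E0]; [lia|].
    destruct (Z.eq_dec (V i - V j) 1) as [|E1]; [lia|].
    exfalso. apply Hn2. exists i, j. auto.
  - apply Hnv. exists k. split; auto. intros i Hi. rewrite Hp by auto.
    destruct Hb as (H1&H2&H3&H4). pose proof (Hf (t i) (H2 i Hi)) as E.
    unfold V in E. rewrite H4 in E by auto. rewrite <- E. ring. Qed.

Definition pstd (k i : nat) : Z := if (i <? k)%nat then 1%Z else 0%Z.

Lemma pstd_chain d : freudenthal_chain d pstd.
Proof. split.
  - intros k i _ _. unfold pstd. destruct (i <? k)%nat; auto.
  - intros k Hk. split.
    + intros i Hi. unfold pstd. destruct (Nat.ltb_spec i k), (Nat.ltb_spec i (S k)); lia.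
    + exists k. split; auto. unfold pstd. rewrite Nat.ltb_irrefl.
      destruct (Nat.ltb_spec k (S k)); [discriminate|lia]. Qed.

Lemma T_inj d de x y : 0 < de <= 1 -> INR d <> 0 -> veq d (Tdelta d de x) (Tdelta d de y) ->
  forall i, (i<d)%nat -> x i = y i.
Proof. unfold veq. intros Hde HD H.
  assert (Hs : vsum d x = vsum d y).
  { assert (E : vsum d (Tdelta d de x) = vsum d (Tdelta d de y)) by (apply vsum_ext; auto).
    rewrite (vsum_ext d (Tdelta d de x) (fun i => x i - al d de * vsum d x)) in E by (intros; apply T_eq).
    rewrite (vsum_ext d (Tdelta d de y) (fun i => y i - al d de * vsum d y)) in E by (intros; apply T_eq).
    rewrite !vsum_minus, !vsum_const in E.
    assert (E2 : de * (vsum d x - vsum d y) = 0).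
    { replace de with (1 - INR d * al d de) by (unfold al; field; auto). lra. }
    apply Rmult_integral in E2. destruct E2; lra. }
  intros i Hi. specialize (H i Hi). rewrite !T_eq in H. rewrite Hs in H. lra. Qed.

Lemma vsum_single' d k f g : (k < d)%nat -> (forall j, (j<d)%nat -> g j = if (j =? k)%nat then f j else 0) ->
  vsum d g = f k.
Proof. intros Hk H. rewrite <- (vsum_single d k f) by auto. apply vsum_ext. auto. Qed.

Lemma tid d de z c r : (2 <= d)%nat -> 0 < de <= 1 -> circumsphere d de z pstd c r ->
  exists t, (forall i, (i<d)%nat -> t i = i) /\ r = Rad d de /\
  forall w, Defs.dist d (Tdelta d de (zvec w)) c =
    sqrt (Fval d de t (fun i => IZR (w i - z i)) + Ndelta d de / (12 * INR d)).
Proof. intros Hd Hde Hc.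
  destruct (prot_formula d de z pstd c r Hd Hde (pstd_chain d) Hc) as (s&t&Hb&Hp&Hr&Hw).
  exists t. split; [|split; auto].
  intros i Hi. pose proof (Hp (S i) i ltac:(lia) Hi) as A1. pose proof (Hp i i ltac:(lia) Hi) as A2.
  unfold pstd in A1, A2. rewrite Nat.ltb_irrefl in A2.
  destruct (Nat.ltb_spec i (S i)); [|lia].
  destruct (Nat.ltb_spec (t i) (S i)); [|discriminate].
  destruct (Nat.ltb_spec (t i) i); [discriminate|]. lia. Qed.

Lemma wit1 d de : (2 <= d)%nat -> 0 < de <= 1 ->
  protection_values d de (sqrt (2 * de ^ 2 + Ndelta d de / (12 * INR d)) - Rad d de).
Proof. intros Hd Hde.
  assert (HD : INR d <> 0) by (apply not_0_INR; lia).
  set (z := fun _ : nat => 0%Z).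
  destruct (exist_center d de z pstd Hd Hde (pstd_chain d)) as [c Hc].
  destruct (tid d de z c (Rad d de) Hd Hde Hc) as (t & Ht & _ & Hw).
  set (w := fun i => if (i =? (d - 1))%nat then (-1)%Z else 0%Z).
  exists z, pstd, c, (Rad d de), w. split; [apply pstd_chain|]. split; [auto|]. split.
  - intros [k [Hk Hv]]. unfold dvertex in Hv. pose proof (T_inj d de _ _ Hde HD Hv) as Hv2. clear Hv. rename Hv2 into Hv.
    specialize (Hv (d-1)%nat ltac:(lia)). unfold zvec, w in Hv. rewrite Nat.eqb_refl in Hv.
    apply eq_IZR in Hv. unfold z, pstd in Hv. destruct (d - 1 <? k)%nat; lia.
  - rewrite Hw. f_equal. f_equal. unfold Fval.
    rewrite (vsum_single' d (d-1) (fun _ => 1)); [|lia|].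
    2:{ intros j Hj. unfold w, z. destruct (j =? d - 1)%nat; simpl; ring. }
    rewrite (vsum_single' d (d-1) (fun _ => -1)); [|lia|].
    2:{ intros j Hj. unfold w, z. destruct (j =? d - 1)%nat; simpl; ring. }
    rewrite (vsum_single' d (d-1) (fun i => - tt d de t i)); [|lia|].
    2:{ intros j Hj. unfold w, z. destruct (j =? d - 1)%nat; simpl; ring. }
    unfold tt. rewrite Ht by lia. rewrite minus_INR by lia. simpl INR.
    unfold be. field. auto. Qed.

Lemma wit2 d de : (2 <= d)%nat -> 0 < de <= 1 ->
  protection_values d de (sqrt (2 * be d de + Ndelta d de / (12 * INR d)) - Rad d de).
Proof. intros Hd Hde.
  assert (HD : INR d <> 0) by (apply not_0_INR; lia).
  set (z := fun _ : nat => 0%Z).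
  destruct (exist_center d de z pstd Hd Hde (pstd_chain d)) as [c Hc].
  destruct (tid d de z c (Rad d de) Hd Hde Hc) as (t & Ht & _ & Hw).
  set (w := fun i => if (i =? 1)%nat then 1%Z else 0%Z).
  exists z, pstd, c, (Rad d de), w. split; [apply pstd_chain|]. split; [auto|]. split.
  - intros [k [Hk Hv]]. unfold dvertex in Hv. pose proof (T_inj d de _ _ Hde HD Hv) as Hv2. clear Hv. rename Hv2 into Hv.
    pose proof (Hv 1%nat ltac:(lia)) as V1. pose proof (Hv 0%nat ltac:(lia)) as V0.
    unfold zvec, w in V1, V0. simpl in V1, V0.
    apply eq_IZR in V1. apply eq_IZR in V0. unfold z, pstd in V1, V0.
    destruct (Nat.ltb_spec 1 k); destruct (Nat.ltb_spec 0 k); simpl in *; lia.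
  - rewrite Hw. f_equal. f_equal. unfold Fval.
    rewrite (vsum_single' d 1 (fun _ => 1)); [|lia|].
    2:{ intros j Hj. unfold w, z. destruct (j =? 1)%nat; simpl; ring. }
    rewrite (vsum_single' d 1 (fun _ => 1)); [|lia|].
    2:{ intros j Hj. unfold w, z. destruct (j =? 1)%nat; simpl; ring. }
    rewrite (vsum_single' d 1 (fun i => tt d de t i)); [|lia|].
    2:{ intros j Hj. unfold w, z. destruct (j =? 1)%nat; simpl; ring. }
    unfold tt. rewrite Ht by lia. simpl INR. field. auto. Qed.

Lemma ratio_eq a b : 0 < b -> 0 <= a -> (sqrt a - sqrt b) / sqrt b = sqrt (a / b) - 1.
Proof. intros Hb Ha. rewrite sqrt_div_alt by auto. field.
  apply Rgt_not_eq. apply sqrt_lt_R0. auto. Qed.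

Theorem theorem4 (d : nat) (delta : R) :
  (2 <= d)%nat -> 0 < delta <= 1 ->
  let D := INR d in
  let N := Ndelta d delta in
  let R := sqrt (N / (12 * D)) in
  (forall z p, freudenthal_chain d p -> exists c, circumsphere d delta z p c R) /\
  (forall z p c r, freudenthal_chain d p -> circumsphere d delta z p c r -> r = R) /\
  (exists P, is_glb (protection_values d delta) P /\
     (1 / sqrt (D + 1) < delta ->
        P / R = sqrt ((delta ^ 4 * (D ^ 2 - 1) + delta ^ 2 * (D ^ 2 - 22) + D ^ 2 + 23) / N) - 1) /\
     (delta = 1 / sqrt (D + 1) ->
        P / R = sqrt ((D ^ 2 + 2 * D + 24) / (D ^ 2 + 2 * D)) - 1) /\
     (delta < 1 / sqrt (D + 1) ->
        P / R = sqrt ((delta ^ 4 * (D ^ 2 - 1) + delta ^ 2 * (D ^ 2 + 24 * D + 2) + D ^ 2 - 1) / N) - 1)).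
Proof.
  intros Hd Hde. cbv zeta. change (sqrt (Ndelta d delta / (12 * INR d))) with (Rad d delta).
  assert (HD : INR d <> 0) by (apply not_0_INR; lia).
  assert (HD2 : 2 <= INR d) by (replace 2 with (INR 2) by (simpl; lra); apply le_INR; lia).
  assert (HN : 0 < Ndelta d delta).
  { unfold Ndelta. assert (0 <= delta ^ 4) by (apply pow_le; lra).
    assert (0 < delta ^ 2) by (apply pow_lt; lra).
    assert (3 <= INR d ^ 2 - 1) by nra.
    assert (0 <= delta ^ 4 * (INR d ^ 2 - 1)) by (apply Rmult_le_pos; lra).
    assert (0 <= delta ^ 2 * (INR d ^ 2 + 2)) by (apply Rmult_le_pos; lra). lra. }
  set (R2 := Ndelta d delta / (12 * INR d)).
  assert (HR2 : 0 < R2) by (unfold R2; apply Rdiv_lt_0_compat; lra).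
  split; [intros z p Hch; apply exist_center; auto|].
  split; [intros z p c r Hch Hc; destruct (center d delta z p c r Hd Hde Hch Hc) as (_&_&_&_&_&H); auto|].
  set (m0 := Rmin (2 * delta ^ 2) (2 * be d delta)).
  assert (Hbe : 0 <= be d delta).
  { unfold be. unfold Rdiv; apply Rmult_le_pos; [|left; apply Rinv_0_lt_compat; lra].
    assert (delta^2 <= 1) by (rewrite <- (pow1 2); apply pow_incr; lra). lra. }
  assert (Hm0 : 0 <= m0).
  { unfold m0. apply Rmin_case; [assert (0 < delta ^ 2) by (apply pow_lt; lra)|]; lra. }
  exists (sqrt (m0 + R2) - Rad d delta). split; [split|].
  - intros x Hx. destruct Hx as (z&p&c&r&w&Hch&Hc&Hnv&->).
    destruct (prot_formula d delta z p c r Hd Hde Hch Hc) as (s&t&Hb&Hp&Hr&Hw).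
    rewrite Hw, Hr. apply Rplus_le_compat_r. apply sqrt_le_1_alt.
    assert (m0 <= Fval d delta t (fun i => IZR (w i - z i))); [|fold R2; lra].
    apply (F_lb d delta s t p z w); auto.
    intros [k [Hk Hi]]. apply Hnv. exists k. split; auto. intros i Hi'. unfold dvertex.
    rewrite !T_eq. rewrite (vsum_ext d (zvec w) (fun i => IZR (z i + p k i))).
    + unfold zvec. rewrite Hi by auto. reflexivity.
    + intros j Hj. unfold zvec. rewrite Hi by auto. reflexivity.
  - intros b Hb. apply Hb. unfold m0. destruct (Rle_dec (2 * delta ^ 2) (2 * be d delta)).
    + rewrite Rmin_left by auto. apply wit1; auto.
    + rewrite Rmin_right by lra. apply wit2; auto.
  - assert (Hsq : 0 < sqrt (INR d + 1)) by (apply sqrt_lt_R0; lra).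
    assert (Hsq2 : sqrt (INR d + 1) ^ 2 = INR d + 1) by (apply pow2_sqrt; lra).
    assert (Hbd : be d delta * INR d = 1 - delta ^ 2) by (unfold be; field; auto).
    unfold Rad. fold R2. rewrite ratio_eq by lra.
    split; [|split].
    + intros Hlt. assert (1 < delta * sqrt (INR d + 1)).
      { apply (Rmult_lt_compat_r (sqrt (INR d + 1))) in Hlt; auto.
        replace (1 / sqrt (INR d + 1) * sqrt (INR d + 1)) with 1 in Hlt by (field; lra). lra. }
      assert (1 < delta ^ 2 * (INR d + 1)) by (rewrite <- Hsq2; nra).
      assert (be d delta < delta ^ 2) by nra.
      unfold m0. rewrite Rmin_right by lra. f_equal. f_equal.
      unfold R2, be. unfold Ndelta. field. unfold Ndelta in HN. lra.
    + intros Heq. assert (E2 : delta ^ 2 = 1 / (INR d + 1)).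
      { rewrite Heq. replace ((1 / sqrt (INR d + 1)) ^ 2) with (1 / (sqrt (INR d + 1) ^ 2)) by (field; lra).
        rewrite Hsq2. reflexivity. }
      assert (be d delta = delta ^ 2).
      { unfold be. rewrite E2. field. lra. }
      unfold m0. rewrite Rmin_left by lra. f_equal. f_equal.
      unfold R2. unfold Ndelta in *. replace (delta ^ 4) with ((delta ^ 2) ^ 2) in * by ring.
      rewrite E2 in *. field. repeat split; try lra; nra.
    + intros Hlt. assert (delta * sqrt (INR d + 1) < 1).
      { apply (Rmult_lt_compat_r (sqrt (INR d + 1))) in Hlt; auto.
        replace (1 / sqrt (INR d + 1) * sqrt (INR d + 1)) with 1 in Hlt by (field; lra). lra. }
      assert (delta ^ 2 * (INR d + 1) < 1).
      { assert (0 < delta * sqrt (INR d + 1)) by nra. rewrite <- Hsq2. nra. }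
      assert (delta ^ 2 < be d delta) by nra.
      unfold m0. rewrite Rmin_left by lra. f_equal. f_equal.
      unfold R2. unfold Ndelta. field. unfold Ndelta in HN. lra.
Qed.
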